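(* Let $n\ge 30$ be an integer and let $k$ be real with $\frac{n-10}{2}-\sqrt n<k<\frac{n-10}{2}+\sqrt n$. Set $p=1+\frac8k$ and $q=\frac{n-8}{2}$. Then $pJ_2-q_2>0$, where $$J_2=(k+4)(k+6-n)(k+6)(k+8-n)+k(k+2-n)(k+6)(k+8-n)+(k+2)(k+4-n)(k+6)(k+8-n)+k(k+2-n)(k+4)(k+6-n)+(k+2)(k+4-n)(k+4)(k+6-n)+k(k+2-n)(k+2)(k+4-n),$$ $$q_2=\big((q+2)(q+4-n)+q(q+2-n)\big)^2+2q(q+2-n)(q+2)(q+4-n).$$
   Context: Here $k=\frac{8}{p-1}$ corresponds to the homogeneity degree of solutions of $\Delta^4u=|u|^{p-1}u$; the claim is a purely algebraic inequality in the real variable $k$ and the integer $n$. *)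

(* Defs.v *)
From Stdlib Require Import Reals.
Open Scope R_scope.

Definition J2 (n k : R) : R :=
  (k+4)*(k+6-n)*(k+6)*(k+8-n) + k*(k+2-n)*(k+6)*(k+8-n)
  + (k+2)*(k+4-n)*(k+6)*(k+8-n) + k*(k+2-n)*(k+4)*(k+6-n)
  + (k+2)*(k+4-n)*(k+4)*(k+6-n) + k*(k+2-n)*(k+2)*(k+4-n).

Definition q2 (n q : R) : R :=
  ((q+2)*(q+4-n) + q*(q+2-n))^2 + 2*q*(q+2-n)*(q+2)*(q+4-n).

(* Main.v *)
Require Import Defs.
From Stdlib Require Import Reals Lra Psatz.
Open Scope R_scope.
Lemma P_pos (s : R) : 27/5 <= s ->
 3/2*s^8 - 6/5*s^7 - 51/2*s^6 - 9*s^5 - 51*s^4 - 108*s^3 + 427*s^2 - 106*s + 554 > 0.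
Proof. intros Hs. set (w := s - 27/5). replace s with (w+27/5) by (unfold w; ring).
 assert (0 <= w) by (unfold w; lra). clearbody w.
 ring_simplify. 
 assert (0 <= w^2) by nra. assert (0<=w^3) by nra. assert (0<=w^4) by nra.
 assert (0<=w^5) by nra. assert (0<=w^6) by nra. assert (0<=w^7) by nra. assert (0<=w^8) by nra.
 lra.
Qed.
Lemma G_pos (s u : R) : 27/5 <= s -> -1 < u -> u < 1 ->
  let t := s*u in let n := s*s in
  554 -106*t +92*t^2 -28*t^3 -6*t^4 +6*t^5 + n*(427 -80*t+34*t^2+3*t^4)
  + n^2*(-51+3*t+3*t^2-3*t^3) + n^3*(-51/2+3*t-3/2*t^2) + 3*n^4 > 0.
Proof. intros Hs H1 H2 t n. unfold n, t.
 assert (h8: 3 - 3/2*u^2 >= 3/2) by nra.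
 assert (h7: 3*u - 3*u^3 >= -6/5).
 { assert (0 <= (u+4/7)^2*(8/7-u)) by (apply Rmult_le_pos; [apply pow2_ge_0 | lra]).
   assert (E7: (u+4/7)^2*(8/7-u) = -u^3 + 48/49*u + 128/343) by field. lra. }
 assert (h6: -51/2 + 3*u^2 + 3*u^4 >= -51/2) by nra.
 assert (h5: 3*u + 6*u^5 >= -9) by nra.
 assert (h4: -51 + 34*u^2 - 6*u^4 >= -51) by nra.
 assert (h3: -80*u - 28*u^3 >= -108) by nra.
 assert (h2: 427 + 92*u^2 >= 427) by nra.
 assert (h1: -106*u >= -106) by nra.
 pose proof (P_pos s Hs).
 assert (0 < s) by lra.
 assert (E: forall a b j, a >= b -> a * s^j >= b * s^j).
 { intros a b j Hab. apply Rle_ge, Rmult_le_compat_r. apply pow_le; lra. lra. }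
 pose proof (E _ _ 8%nat h8). pose proof (E _ _ 7%nat h7). pose proof (E _ _ 6%nat h6).
 pose proof (E _ _ 5%nat h5). pose proof (E _ _ 4%nat h4). pose proof (E _ _ 3%nat h3).
 pose proof (E _ _ 2%nat h2). pose proof (E _ _ 1%nat h1).
 assert (Heq: 554 - 106 * (s * u) + 92 * (s * u) ^ 2 - 28 * (s * u) ^ 3 - 6 * (s * u) ^ 4 + 6 * (s * u) ^ 5 +
  s * s * (427 - 80 * (s * u) + 34 * (s * u) ^ 2 + 3 * (s * u) ^ 4) +
  (s * s) ^ 2 * (-51 + 3 * (s * u) + 3 * (s * u) ^ 2 - 3 * (s * u) ^ 3) +
  (s * s) ^ 3 * (-51 / 2 + 3 * (s * u) - 3 / 2 * (s * u) ^ 2) + 3 * (s * s) ^ 4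
  = (3 - 3/2*u^2)*s^8 + (3*u - 3*u^3)*s^7 + (-51/2 + 3*u^2 + 3*u^4)*s^6
    + (3*u + 6*u^5)*s^5 + (-51 + 34*u^2 - 6*u^4)*s^4 + (-80*u - 28*u^3)*s^3
    + (427 + 92*u^2)*s^2 + (-106*u)*s^1 + 554) by field.
 rewrite Heq. lra.
Qed.

Theorem lemma8p3 (n : nat) (k : R) :
  (30 <= n)%nat ->
  (INR n - 10) / 2 - sqrt (INR n) < k ->
  k < (INR n - 10) / 2 + sqrt (INR n) ->
  let p := 1 + 8 / k in
  let q := (INR n - 8) / 2 in
  p * J2 (INR n) k - q2 (INR n) q > 0.
Proof.
  intros Hn H1 H2 p q. unfold p, q.
  assert (HN: 30 <= INR n) by (apply le_INR in Hn; simpl in Hn; lra).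
  set (N := INR n) in *. clearbody N.
  set (s := sqrt N) in *.
  assert (Hss: s * s = N) by (apply sqrt_sqrt; lra).
  assert (Hs0: 0 <= s) by apply sqrt_pos.
  assert (Hs: 27/5 <= s) by nra.
  clearbody s.
  assert (Hk: 0 < k) by nra.
  set (u := (k - (N-10)/2)/s).
  assert (Ht: s*u = k - (N-10)/2) by (unfold u; field; lra).
  assert (Hu1: -1 < u) by nra.
  assert (Hu2: u < 1) by nra.
  pose proof (G_pos s u Hs Hu1 Hu2) as hG. cbv zeta in hG.
  rewrite Ht, Hss in hG. clearbody u.
  assert (E: (1 + 8 / k) * J2 N k - q2 N ((N - 8) / 2) =
    ((k+8) * J2 N k - k * q2 N ((N - 8) / 2)) / k) by (field; lra).
  rewrite E. apply Rdiv_lt_0_compat; [|lra].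
  set (t := k - (N-10)/2) in hG.
  assert (Hk': k = t + (N-10)/2) by (unfold t; ring).
  clearbody t. subst k. unfold J2, q2.
  match type of hG with ?X > 0 => assert (EE: (t + (N - 10) / 2 + 8) * J2 N (t + (N - 10) / 2) - (t + (N - 10) / 2) * q2 N ((N - 8) / 2) = X) end.
  { unfold J2, q2. field. }
  unfold J2, q2 in EE. lra.
Qed.
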